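(* Let $c\ge 0$, $m\ge 2$, and let $x=((x^1,n_1),\dots,(x^q,n_q))$ be a profile with $q\ge 2$. Suppose candidate $i$ is located at $x^l$ and $n_l=2$. Then $$v_i(x^{l-},x_{-i})+v_i(x^{l+},x_{-i})=2v_i(x).$$ In particular, if $x$ is a non-convergent Nash equilibrium of the rule $s=(c,m)$, then $v_i(x^{l-},x_{-i})=v_i(x^{l+},x_{-i})=v_i(x)$.
   Context: Setting: voters' ideal points are distributed uniformly (unit mass, Lebesgue measure) on $[0,1]$. There are $m$ candidates; a profile is $x=(x_1,\dots,x_m)\in[0,1]^m$. A voter with ideal point $y$ ranks candidates by distance $|x_i-y|$ (closer is better); ties are broken by a fair lottery (uniformly random strict order among tied candidates). Under the best-worst rule $s=(c,m)$ ($c\ge0$), a candidate receives $1$ point from each voter ranking her first, $-c$ from each voter ranking her last ($m$-th), and $0$ otherwise; $v_i(x)$ is candidate $i$'s expected total points. $(t,x_{-i})$ denotes $x$ with $x_i$ replaced by $t$. For a point $p$, $v_i(p^-,x_{-i}):=\lim_{t\uparrow p}v_i(t,x_{-i})$ and $v_i(p^+,x_{-i}):=\lim_{t\downarrow p}v_i(t,x_{-i})$ (scores after an infinitesimal move just left, resp. right, of $p$). A (pure-strategy Nash) equilibrium is a profile $x^*$ with $v_i(x^* )\ge v_i(t,x^*_{-i})$ for all $i$ and $t\in[0,1]$; it is non-convergent if at least two platforms are distinct. A profile determines its distinct occupied positions $x^1<\dots<x^q$, with $n_j$ the number of candidates at $x^j$; we write $x=((x^1,n_1),\dots,(x^q,n_q))$.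 *)

(* Defs.v *)
From Stdlib Require Import Reals Lra List Classical ClassicalEpsilon.
Import ListNotations.
Open Scope R_scope.

(* A profile of m candidates is x : nat -> R; candidates are 0, ..., m-1. *)

Definition Reqb (a b : R) : bool := if Req_EM_T a b then true else false.
Definition Rltb (a b : R) : bool := if Rlt_dec a b then true else false.

Definition countc (m : nat) (p : nat -> bool) : nat := length (filter p (seq 0 m)).

Definition dist_c (x : nat -> R) (j : nat) (y : R) : R := Rabs (x j - y).

(* Probability (under fair tie-breaking lottery) that voter y ranks candidate i
   first: 1/k if i is among the k closest (tied) candidates, 0 otherwise. *)
Definition prob_first (m : nat) (x : nat -> R) (i : nat) (y : R) : R :=
  if existsb (fun j => Rltb (dist_c x j y) (dist_c x i y)) (seq 0 m) then 0
  else / INR (countc m (fun j => Reqb (dist_c x j y) (dist_c x i y))).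

Definition prob_last (m : nat) (x : nat -> R) (i : nat) (y : R) : R :=
  if existsb (fun j => Rltb (dist_c x i y) (dist_c x j y)) (seq 0 m) then 0
  else / INR (countc m (fun j => Reqb (dist_c x j y) (dist_c x i y))).

(* Expected points given to candidate i by voter y under the best-worst rule (c,m). *)
Definition voter_score (c : R) (m : nat) (x : nat -> R) (i : nat) (y : R) : R :=
  prob_first m x i y - c * prob_last m x i y.

(* Riemann integral over [0,1] (value independent of the integrability proof);
   0 if not integrable (never the case here: the integrand is a step function). *)
Definition integral01 (f : R -> R) : R :=
  match excluded_middle_informative (inhabited (Riemann_integrable f 0 1)) with
  | left h => RiemannInt (epsilon h (fun _ => True))
  | right _ => 0
  end.

(* v_i(x): expected total points of candidate i; voters uniform on [0,1]. *)
Definition score (c : R) (m : nat) (x : nat -> R) (i : nat) : R :=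
  integral01 (voter_score c m x i).

Definition upd (x : nat -> R) (i : nat) (t : R) : nat -> R :=
  fun j => if Nat.eq_dec j i then t else x j.

Definition is_profile (m : nat) (x : nat -> R) : Prop :=
  forall j, (j < m)%nat -> 0 <= x j <= 1.

Definition nash_eq (c : R) (m : nat) (x : nat -> R) : Prop :=
  is_profile m x /\
  forall j t, (j < m)%nat -> 0 <= t <= 1 -> score c m (upd x j t) j <= score c m x j.

Definition non_convergent (m : nat) (x : nat -> R) : Prop :=
  exists j k, (j < m)%nat /\ (k < m)%nat /\ x j <> x k.

(* v_i(p^-, x_{-i}) = L  and  v_i(p^+, x_{-i}) = L *)
Definition left_lim (c : R) (m : nat) (x : nat -> R) (i : nat) (p L : R) : Prop :=
  limit1_in (fun t => score c m (upd x i t) i) (fun t => t < p) L p.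
Definition right_lim (c : R) (m : nat) (x : nat -> R) (i : nat) (p L : R) : Prop :=
  limit1_in (fun t => score c m (upd x i t) i) (fun t => p < t) L p.

(* Main.v *)
Require Import Defs.
From Stdlib Require Import Reals Lra Lia List Classical ClassicalEpsilon.
From Coquelicot Require Import Coquelicot.
Import ListNotations.
Open Scope R_scope.

Lemma exR_minus (f g : R -> R) a b : ex_RInt f a b -> ex_RInt g a b ->
  ex_RInt (fun y => f y - g y) a b.
Proof. intros. exact (ex_RInt_minus f g a b H H0). Qed.
Lemma exR_plus (f g : R -> R) a b : ex_RInt f a b -> ex_RInt g a b ->
  ex_RInt (fun y => f y + g y) a b.
Proof. intros. exact (ex_RInt_plus f g a b H H0). Qed.
Lemma exR_scal (f : R -> R) k a b : ex_RInt f a b ->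
  ex_RInt (fun y => k * f y) a b.
Proof. intros. exact (ex_RInt_scal f a b k H). Qed.
Lemma RI_minus (f g : R -> R) a b : ex_RInt f a b -> ex_RInt g a b ->
  RInt (fun y => f y - g y) a b = RInt f a b - RInt g a b.
Proof. intros. exact (RInt_minus f g a b H H0). Qed.
Lemma RI_plus (f g : R -> R) a b : ex_RInt f a b -> ex_RInt g a b ->
  RInt (fun y => f y + g y) a b = RInt f a b + RInt g a b.
Proof. intros. exact (RInt_plus f g a b H H0). Qed.
Lemma RI_scal (f : R -> R) k a b : ex_RInt f a b ->
  RInt (fun y => k * f y) a b = k * RInt f a b.
Proof. intros. exact (RInt_scal f a b k H). Qed.
Lemma RI_const (k a b : R) : RInt (fun _ => k) a b = (b - a) * k.
Proof. rewrite RInt_const. reflexivity. Qed.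
Lemma RI_chasles (f : R -> R) a b c : ex_RInt f a b -> ex_RInt f b c ->
  RInt f a b + RInt f b c = RInt f a c.
Proof. intros. exact (RInt_Chasles f a b c H H0). Qed.

Lemma exR_ch1 (f : R -> R) a b c : a <= b <= c -> ex_RInt f a c -> ex_RInt f a b.
Proof. intros. exact (ex_RInt_Chasles_1 f a b c H H0). Qed.
Lemma exR_ch2 (f : R -> R) a b c : a <= b <= c -> ex_RInt f a c -> ex_RInt f b c.
Proof. intros. exact (ex_RInt_Chasles_2 f a b c H H0). Qed.

Lemma RI_ext (f g : R -> R) a b : (forall x, Rmin a b < x < Rmax a b -> f x = g x) ->
  RInt f a b = RInt g a b.
Proof. intros. exact (RInt_ext f g a b H). Qed.
Lemma exR_ext (f g : R -> R) a b : (forall x, Rmin a b < x < Rmax a b -> f x = g x) ->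
  ex_RInt f a b -> ex_RInt g a b.
Proof. intros. exact (ex_RInt_ext f g a b H H0). Qed.

Lemma integral01_RInt (f : R -> R) : ex_RInt f 0 1 -> integral01 f = RInt f 0 1.
Proof.
  intros H. unfold integral01.
  destruct (excluded_middle_informative _) as [h|h].
  - rewrite (RInt_Reals f 0 1 (epsilon h (fun _ => True))). reflexivity.
  - exfalso. apply h. constructor. apply ex_RInt_Reals_0. exact H.
Qed.

Definition PC (P : list R) (f : R -> R) : Prop :=
  forall u v, u < v -> (forall q, In q P -> ~ (u < q < v)) ->
  forall y y', u < y < v -> u < y' < v -> f y = f y'.

Lemma step_int (P : list R) : forall (f : R -> R) a b, a <= b ->
  (forall u v, a <= u -> u < v -> v <= b -> (forall q, In q P -> ~ (u < q < v)) ->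
    forall y y', u < y < v -> u < y' < v -> f y = f y') ->
  ex_RInt f a b.
Proof.
  induction P as [|q P IH]; intros f a b Hab H.
  - destruct (Req_dec a b) as [->|Hne]. apply ex_RInt_point.
    apply (exR_ext (fun _ => f ((a+b)/2)) f).
    + intros y Hy. rewrite Rmin_left in Hy by lra. rewrite Rmax_right in Hy by lra.
      apply (H a b); try lra. intros q []. 
    + apply ex_RInt_const.
  - destruct (classic (a < q < b)) as [Hq|Hq].
    + apply (ex_RInt_Chasles f a q b).
      * apply IH. lra. intros u v H1 H2 H3 HP. apply H; try lra.
        intros q' [<-|Hq']. lra. auto.
      * apply IH. lra. intros u v H1 H2 H3 HP. apply H; try lra.
        intros q' [<-|Hq']. lra. auto.
    + apply IH. auto. intros u v H1 H2 H3 HP. apply H; try lra.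
      intros q' [<-|Hq']. lra. auto.
Qed.

Lemma PC_int P (f : R -> R) : PC P f -> ex_RInt f 0 1.
Proof. intros H. apply (step_int P). lra. intros. eapply H; eauto. Qed.

Lemma PC_op P (op : R -> R -> R) f g : PC P f -> PC P g -> PC P (fun y => op (f y) (g y)).
Proof. intros Hf Hg u v Huv HP y y' Hy Hy'. rewrite (Hf u v Huv HP y y' Hy Hy'), (Hg u v Huv HP y y' Hy Hy'). auto. Qed.

Lemma PC_sub P P' f : PC P f -> (forall q, In q P -> In q P') -> PC P' f.
Proof. intros Hf Hs u v Huv HP. apply Hf; auto. Qed.

Lemma PC_if P p f g : PC P f -> PC P g -> In p P ->
  PC P (fun y => if Rlt_dec p y then f y else g y).
Proof.
  intros Hf Hg Hp u v Huv HP y y' Hy Hy'. pose proof (HP p Hp).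
  destruct (Rlt_dec p y); destruct (Rlt_dec p y'); try lra.
  exact (Hf u v Huv HP y y' Hy Hy'). exact (Hg u v Huv HP y y' Hy Hy').
Qed.

Definition ind (d h y : R) : R := if Rle_dec (Rabs (y - d)) h then 1 else 0.

Lemma ind_PC d h : PC [d - h; d + h] (ind d h).
Proof.
  intros u v Huv HP y y' Hy Hy'. unfold ind.
  assert (H1 := HP (d-h) ltac:(simpl; auto)). assert (H2 := HP (d+h) ltac:(simpl; auto)).
  destruct (Rle_dec (Rabs (y - d)) h); destruct (Rle_dec (Rabs (y' - d)) h); auto;
  exfalso; revert r n; unfold Rabs; repeat destruct Rcase_abs; intros; lra.
Qed.

Lemma ind_int d h : ex_RInt (ind d h) 0 1.
Proof. exact (PC_int _ _ (ind_PC d h)). Qed.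

Lemma ind_bound d h : 0 <= h -> RInt (ind d h) 0 1 <= 2 * h.
Proof.
  intros Hh.
  set (a := Rmax 0 (Rmin 1 (d - h))). set (b := Rmax a (Rmin 1 (d + h))).
  assert (Ha : 0 <= a <= 1). { unfold a, Rmax, Rmin; repeat destruct Rle_dec; lra. }
  assert (Hb : a <= b <= 1). { unfold b, Rmax, Rmin; repeat destruct Rle_dec; lra. }
  pose proof (ind_int d h) as I.
  assert (I1 : ex_RInt (ind d h) 0 a) by (apply (exR_ch1 _ 0 a 1); auto; lra).
  assert (I2 : ex_RInt (ind d h) a 1) by (apply (exR_ch2 _ 0 a 1); auto; lra).
  assert (I3 : ex_RInt (ind d h) a b) by (apply (exR_ch1 _ a b 1); auto; lra).
  assert (I4 : ex_RInt (ind d h) b 1) by (apply (exR_ch2 _ a b 1); auto; lra).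
  rewrite <- (RI_chasles _ 0 a 1 I1 I2), <- (RI_chasles _ a b 1 I3 I4).
  assert (E1 : RInt (ind d h) 0 a = 0).
  { rewrite (RI_ext _ (fun _ => 0)). rewrite RI_const. lra.
    intros y Hy. rewrite Rmin_left in Hy by lra. rewrite Rmax_right in Hy by lra.
    unfold ind. destruct Rle_dec; auto. exfalso. revert r Hy. unfold a, Rmax, Rmin, Rabs.
    repeat destruct Rle_dec; repeat destruct Rcase_abs; intros; lra. }
  assert (E2 : RInt (ind d h) b 1 = 0).
  { rewrite (RI_ext _ (fun _ => 0)). rewrite RI_const; lra.
    intros y Hy. rewrite Rmin_left in Hy by lra. rewrite Rmax_right in Hy by lra.
    unfold ind. destruct Rle_dec; auto. exfalso. revert r Hy. unfold b, a, Rmax, Rmin, Rabs.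
    repeat destruct Rle_dec; repeat destruct Rcase_abs; intros; lra. }
  assert (E3 : RInt (ind d h) a b <= RInt (fun _ => 1) a b).
  { apply RInt_le; auto. lra. apply ex_RInt_const. intros; unfold ind; destruct Rle_dec; lra. }
  rewrite RI_const in E3.
  assert (b - a <= 2 * h). { unfold b, a, Rmax, Rmin; repeat destruct Rle_dec; lra. }
  lra.
Qed.

Fixpoint phi (D : list R) (h y : R) : R :=
  match D with [] => 0 | d :: D' => ind d h y + phi D' h y end.

Lemma phi_int D h : ex_RInt (phi D h) 0 1.
Proof.
  induction D; simpl. apply ex_RInt_const.
  apply exR_plus; auto. apply ind_int.
Qed.

Lemma phi_bound D h : 0 <= h -> RInt (phi D h) 0 1 <= INR (length D) * (2 * h).
Proof.
  intros Hh. induction D; cbn [phi length].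
  - rewrite RI_const. simpl. lra.
  - rewrite RI_plus by (apply ind_int || apply phi_int).
    pose proof (ind_bound a h Hh). rewrite S_INR. lra.
Qed.

Lemma phi_nonneg D h y : 0 <= phi D h y.
Proof. induction D; simpl. lra. unfold ind. destruct Rle_dec; lra. Qed.

Lemma phi_ge1 D h y : (exists d, In d D /\ Rabs (y - d) <= h) -> 1 <= phi D h y.
Proof.
  induction D; simpl; intros [d [Hd Hy]]. destruct Hd.
  destruct Hd as [<-|Hd].
  - unfold ind. destruct Rle_dec; try lra. pose proof (phi_nonneg D h y). lra.
  - assert (1 <= phi D h y) by (apply IHD; eauto). unfold ind. destruct Rle_dec; lra.
Qed.

Lemma small_int (D : list R) (h M : R) (g : R -> R) : 0 <= h -> 0 <= M ->
  ex_RInt g 0 1 -> (forall y, 0 <= y <= 1 -> Rabs (g y) <= M) ->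
  (forall y, 0 <= y <= 1 -> (forall d, In d D -> h < Rabs (y - d)) -> g y = 0) ->
  Rabs (RInt g 0 1) <= M * (INR (length D) * (2 * h)).
Proof.
  intros Hh HM Hg Hb Hz.
  assert (Hd : forall y, 0 < y < 1 -> Rabs (g y) <= M * phi D h y).
  { intros y Hy. destruct (classic (exists d, In d D /\ Rabs (y - d) <= h)) as [E|E].
    - pose proof (phi_ge1 D h y E). pose proof (Hb y ltac:(lra)). nra.
    - rewrite Hz. rewrite Rabs_R0. pose proof (phi_nonneg D h y). nra. lra.
      intros d Hd. destruct (Rlt_le_dec h (Rabs (y - d))); auto. exfalso; eauto. }
  assert (Hphi : ex_RInt (fun y => M * phi D h y) 0 1) by (apply exR_scal, phi_int).
  assert (U : RInt g 0 1 <= RInt (fun y => M * phi D h y) 0 1).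
  { apply RInt_le; auto. lra. intros y Hy. pose proof (Hd y Hy). pose proof (Rle_abs (g y)). lra. }
  assert (L : RInt (fun y => - (M * phi D h y)) 0 1 <= RInt g 0 1).
  { apply RInt_le; auto. lra. apply (exR_ext (fun y => 0 - M * phi D h y)). intros; nra.
    apply exR_minus; auto. apply ex_RInt_const.
    intros y Hy. pose proof (Hd y Hy). pose proof (Rle_abs (- g y)). rewrite Rabs_Ropp in H0. lra. }
  rewrite (RI_ext _ (fun y => 0 - M * phi D h y)) in L by (intros; nra).
  rewrite RI_minus in L by (auto; apply ex_RInt_const). rewrite RI_const in L.
  rewrite RI_scal in U, L by apply phi_int.
  pose proof (phi_bound D h Hh).
  apply Rabs_le. split; nra.
Qed.

Lemma pos_int (g : R -> R) a b : ex_RInt g 0 1 -> 0 <= a < b -> b <= 1 ->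
  (forall y, 0 < y < 1 -> 0 <= g y) -> (forall y, a < y < b -> 1/2 <= g y) ->
  (b - a) / 2 <= RInt g 0 1.
Proof.
  intros I Hab Hb H0 H1.
  assert (I1 : ex_RInt g 0 a) by (apply (exR_ch1 _ 0 a 1); auto; lra).
  assert (I2 : ex_RInt g a 1) by (apply (exR_ch2 _ 0 a 1); auto; lra).
  assert (I3 : ex_RInt g a b) by (apply (exR_ch1 _ a b 1); auto; lra).
  assert (I4 : ex_RInt g b 1) by (apply (exR_ch2 _ a b 1); auto; lra).
  rewrite <- (RI_chasles _ 0 a 1 I1 I2), <- (RI_chasles _ a b 1 I3 I4).
  assert (RInt (fun _ => 0) 0 a <= RInt g 0 a) by (apply RInt_le; [lra|apply ex_RInt_const|exact I1|intros; apply H0; lra]).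
  assert (RInt (fun _ => 1/2) a b <= RInt g a b) by (apply RInt_le; [lra|apply ex_RInt_const|exact I3|intros; apply H1; lra]).
  assert (RInt (fun _ => 0) b 1 <= RInt g b 1) by (apply RInt_le; [lra|apply ex_RInt_const|exact I4|intros; apply H0; lra]).
  rewrite !RI_const in *. lra.
Qed.

Definition S (X : nat -> R) (i j : nat) (y : R) : R := (X j - X i) * (X j + X i - 2 * y).

Lemma abs_lt_sq u v : Rabs u < Rabs v <-> u * u < v * v.
Proof. unfold Rabs; destruct (Rcase_abs u); destruct (Rcase_abs v); split; intros; nra. Qed.
Lemma abs_eq_sq u v : Rabs u = Rabs v <-> u * u = v * v.
Proof.
  split; intros H.
  - assert (Rabs u * Rabs u = Rabs v * Rabs v) by (rewrite H; auto).
    rewrite <- !Rabs_mult in H0. rewrite !Rabs_pos_eq in H0 by nra. auto.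
  - destruct (Rtotal_order (Rabs u) (Rabs v)) as [h|[h|h]]; auto;
    [apply abs_lt_sq in h | apply abs_lt_sq in h]; lra.
Qed.

Lemma Rltb_iff a b : Rltb a b = true <-> a < b.
Proof. unfold Rltb; destruct Rlt_dec; split; intros; auto; discriminate. Qed.
Lemma Reqb_iff a b : Reqb a b = true <-> a = b.
Proof. unfold Reqb; destruct Req_EM_T; split; intros; auto; discriminate. Qed.

Lemma bool_iff (b b' : bool) : (b = true <-> b' = true) -> b = b'.
Proof. destruct b, b'; intuition. Qed.

Lemma cl_iff X i j y : Rltb (dist_c X j y) (dist_c X i y) = true <-> S X i j y < 0.
Proof.
  rewrite Rltb_iff. unfold dist_c, S. rewrite abs_lt_sq. split; intros; nra.
Qed.
Lemma fa_iff X i j y : Rltb (dist_c X i y) (dist_c X j y) = true <-> 0 < S X i j y.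
Proof.
  rewrite Rltb_iff. unfold dist_c, S. rewrite abs_lt_sq. split; intros; nra.
Qed.
Lemma ti_iff X i j y : Reqb (dist_c X j y) (dist_c X i y) = true <-> S X i j y = 0.
Proof.
  rewrite Reqb_iff. unfold dist_c, S. rewrite abs_eq_sq. split; intros; nra.
Qed.

Lemma existsb_ext_in (f g : nat -> bool) l : (forall j, In j l -> f j = g j) -> existsb f l = existsb g l.
Proof. induction l; simpl; intros H; auto. rewrite H, IHl; auto. Qed.
Lemma filter_len_ext_in (f g : nat -> bool) l : (forall j, In j l -> f j = g j) ->
  length (filter f l) = length (filter g l).
Proof. induction l; simpl; intros H; auto. rewrite H. destruct (g a); simpl; rewrite IHl; auto. auto. Qed.
Lemma countc_ext m f g : (forall j, (j < m)%nat -> f j = g j) -> countc m f = countc m g.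
Proof. intros H. unfold countc. apply filter_len_ext_in. intros j Hj. apply in_seq in Hj. apply H. lia. Qed.

Lemma filter_len0 (f : nat -> bool) l : (forall j, In j l -> f j = false) -> length (filter f l) = 0%nat.
Proof. induction l; simpl; intros H; auto. rewrite H; auto. Qed.

Lemma count_eqb m i : (i < m)%nat -> countc m (fun j => Nat.eqb j i) = 1%nat.
Proof.
  induction m; intros H. lia. unfold countc in *. rewrite seq_S, filter_app, length_app. simpl.
  destruct (Nat.eq_dec i m) as [->|Hn].
  - rewrite filter_len0. rewrite Nat.eqb_refl. auto.
    intros j Hj. apply in_seq in Hj. apply Nat.eqb_neq. lia.
  - rewrite IHm by lia. replace (Nat.eqb m i) with false. auto. symmetry; apply Nat.eqb_neq; lia.
Qed.

Definition sgn_eq (a b : R) : Prop := (a < 0 <-> b < 0) /\ (a = 0 <-> b = 0) /\ (0 < a <-> 0 < b).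

Lemma sgn_eq_of a b : (a < 0 /\ b < 0) \/ (a = 0 /\ b = 0) \/ (0 < a /\ 0 < b) -> sgn_eq a b.
Proof. unfold sgn_eq; intros; repeat split; intros; lra. Qed.

Lemma pf_same m X X' i y y' : (forall j, (j < m)%nat -> sgn_eq (S X i j y) (S X' i j y')) ->
  prob_first m X i y = prob_first m X' i y'.
Proof.
  intros H. unfold prob_first.
  rewrite (existsb_ext_in _ (fun j => Rltb (dist_c X' j y') (dist_c X' i y'))).
  2:{ intros j Hj. apply in_seq in Hj. apply bool_iff. rewrite !cl_iff. apply H. lia. }
  rewrite (countc_ext m _ (fun j => Reqb (dist_c X' j y') (dist_c X' i y'))). auto.
  intros j Hj. apply bool_iff. rewrite !ti_iff. apply H. lia.
Qed.
Lemma pl_same m X X' i y y' : (forall j, (j < m)%nat -> sgn_eq (S X i j y) (S X' i j y')) ->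
  prob_last m X i y = prob_last m X' i y'.
Proof.
  intros H. unfold prob_last.
  rewrite (existsb_ext_in _ (fun j => Rltb (dist_c X' i y') (dist_c X' j y'))).
  2:{ intros j Hj. apply in_seq in Hj. apply bool_iff. rewrite !fa_iff. apply H. lia. }
  rewrite (countc_ext m _ (fun j => Reqb (dist_c X' j y') (dist_c X' i y'))). auto.
  intros j Hj. apply bool_iff. rewrite !ti_iff. apply H. lia.
Qed.

Lemma inv_INR_bound n : 0 <= / INR n <= 1.
Proof.
  destruct n. simpl. rewrite Rinv_0. lra.
  pose proof (pos_INR n). rewrite S_INR. split.
  apply Rlt_le, Rinv_0_lt_compat; lra.
  rewrite <- Rinv_1. apply Rinv_le_contravar; lra.
Qed.
Lemma pf_bound m X i y : 0 <= prob_first m X i y <= 1.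
Proof. unfold prob_first. destruct existsb. lra. apply inv_INR_bound. Qed.
Lemma pl_bound m X i y : 0 <= prob_last m X i y <= 1.
Proof. unfold prob_last. destruct existsb. lra. apply inv_INR_bound. Qed.

Definition mids (X : nat -> R) (i m : nat) : list R := map (fun j => (X j + X i) / 2) (seq 0 m).

Lemma mul_sgn a e e' : a <> 0 -> ((e < 0 /\ e' < 0) \/ (0 < e /\ 0 < e')) -> sgn_eq (a * e) (a * e').
Proof.
  intros Ha He. apply sgn_eq_of. destruct (Rtotal_order a 0) as [h|[h|h]]; [|lra|];
  destruct He as [[]|[]]; [right;right|left|left|right;right]; split; nra.
Qed.

Lemma S_PC_sgn m X i u v y y' : u < v -> (forall q, In q (mids X i m) -> ~ (u < q < v)) ->
  u < y < v -> u < y' < v -> forall j, (j < m)%nat -> sgn_eq (S X i j y) (S X i j y').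
Proof.
  intros Huv HP Hy Hy' j Hj. unfold S.
  destruct (Req_dec (X j) (X i)) as [E|E].
  - rewrite E. apply sgn_eq_of. right; left. split; ring.
  - apply mul_sgn. lra.
    assert (Hq : ~ (u < (X j + X i)/2 < v)).
    { apply HP. unfold mids. apply in_map_iff. exists j. split; auto. apply in_seq. lia. }
    destruct (Rle_dec ((X j + X i)/2) u). left; lra. right; lra.
Qed.

Lemma pf_PC m X i : PC (mids X i m) (prob_first m X i).
Proof. intros u v Huv HP y y' Hy Hy'. apply pf_same. eapply S_PC_sgn; eauto. Qed.
Lemma pl_PC m X i : PC (mids X i m) (prob_last m X i).
Proof. intros u v Huv HP y y' Hy Hy'. apply pl_same. eapply S_PC_sgn; eauto. Qed.
Lemma vs_PC c m X i : PC (mids X i m) (voter_score c m X i).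
Proof.
  unfold voter_score. apply (PC_op _ (fun a b => a - c * b)); [apply pf_PC|apply pl_PC].
Qed.

Lemma upd_i x i t : upd x i t i = t.
Proof. unfold upd. destruct Nat.eq_dec; congruence. Qed.
Lemma upd_j x i t j : j <> i -> upd x i t j = x j.
Proof. unfold upd. destruct Nat.eq_dec; congruence. Qed.

Lemma strict_same a a' : Rabs (a' - a) < Rabs a -> (0 < a /\ 0 < a') \/ (a < 0 /\ a' < 0).
Proof. unfold Rabs; repeat destruct Rcase_abs; intros; lra. Qed.

Lemma other_k m x i : (i < m)%nat -> countc m (fun j => Reqb (x j) (x i)) = 2%nat ->
  exists k, (k < m)%nat /\ k <> i /\ x k = x i.
Proof.
  intros Hi Hc. apply NNPP. intros Hn.
  assert (countc m (fun j => Reqb (x j) (x i)) = countc m (fun j => Nat.eqb j i)).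
  { apply countc_ext. intros j Hj. apply bool_iff. rewrite Reqb_iff, Nat.eqb_eq.
    split; intros; subst; auto. apply NNPP; intros Hji. apply Hn; eauto. }
  rewrite count_eqb in H; auto. lia.
Qed.

Lemma pointwise (m : nat) (x : nat -> R) (i : nat) (dl h t y : R) :
  (i < m)%nat -> countc m (fun j => Reqb (x j) (x i)) = 2%nat ->
  (forall j, (j < m)%nat -> x j <> x i -> dl <= Rabs (x j - x i)) ->
  0 < h < dl -> Rabs (t - x i) <= h -> t <> x i ->
  (forall d, In d (x i :: mids x i m) -> h < Rabs (y - d)) ->
  ((((x i < t /\ x i < y) \/ (t < x i /\ y < x i)) ->
     prob_first m (upd x i t) i y = 2 * prob_first m x i y /\ prob_last m (upd x i t) i y = 0)
  /\ (((x i < t /\ y < x i) \/ (t < x i /\ x i < y)) ->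
     prob_first m (upd x i t) i y = 0 /\ prob_last m (upd x i t) i y = 2 * prob_last m x i y)).
Proof.
  intros Hi Hc Hdl Hh Ht Htp Hy.
  set (p := x i) in *. set (X := upd x i t).
  destruct (other_k m x i Hi Hc) as [k [Hk [Hki Hxk]]]. fold p in Hxk.
  assert (Hyp : h < Rabs (y - p)) by (apply Hy; simpl; auto).
  assert (F1 : S X i i y = 0 /\ S x i i y = 0) by (unfold S; split; ring).
  assert (Kval : forall j, j <> i -> x j = p -> S x i j y = 0 /\ S X i j y = (p - t) * (p + t - 2 * y)).
  { intros j Hj E. unfold S, X. rewrite upd_j, upd_i, E by auto. fold p. split; ring. }
  assert (F3 : forall j, (j < m)%nat -> x j <> p ->
     (S x i j y < 0 /\ S X i j y < 0) \/ (0 < S x i j y /\ 0 < S X i j y)).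
  { intros j Hj E. assert (Hji : j <> i) by (intro; subst; apply E; auto).
    unfold S, X. rewrite upd_j, upd_i by auto. fold p.
    assert (A := Hdl j Hj E). fold p in A.
    assert (Hm : h < Rabs (y - (x j + p) / 2)).
    { apply Hy. right. unfold mids. apply in_map_iff. exists j. split; auto. apply in_seq. lia. }
    assert (S1 : Rabs ((x j - t) - (x j - p)) < Rabs (x j - p)).
    { replace ((x j - t) - (x j - p)) with (- (t - p)) by ring. rewrite Rabs_Ropp. lra. }
    assert (S2 : Rabs ((x j + t - 2 * y) - (x j + p - 2 * y)) < Rabs (x j + p - 2 * y)).
    { replace ((x j + t - 2 * y) - (x j + p - 2 * y)) with (t - p) by ring.
      replace (x j + p - 2 * y) with (-2 * (y - (x j + p) / 2)) by field.
      rewrite Rabs_mult. replace (Rabs (-2)) with 2. lra.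
      unfold Rabs; destruct Rcase_abs; lra. }
    apply strict_same in S1. apply strict_same in S2.
    destruct S1 as [[]|[]]; destruct S2 as [[]|[]]; [right|left|left|right]; split; nra. }
  assert (Knz : (p - t) * (p + t - 2 * y) <> 0).
  { intros E. apply Rmult_integral in E. destruct E as [E|E]. apply Htp; lra.
    revert Ht Hyp E. unfold Rabs; repeat destruct Rcase_abs; intros; lra. }
  assert (CX : countc m (fun j => Reqb (dist_c X j y) (dist_c X i y)) = 1%nat).
  { rewrite <- (count_eqb m i Hi). apply countc_ext. intros j Hj. apply bool_iff.
    rewrite ti_iff, Nat.eqb_eq. split.
    - intros E. destruct (Nat.eq_dec j i) as [->|Hn]; auto. exfalso.
      destruct (Req_dec (x j) p) as [E'|E'].
      + apply Knz. rewrite <- (proj2 (Kval j Hn E')). auto.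
      + destruct (F3 j Hj E') as [[]|[]]; lra.
    - intros ->. apply F1. }
  assert (Cx : countc m (fun j => Reqb (dist_c x j y) (dist_c x i y)) = 2%nat).
  { rewrite <- Hc. apply countc_ext. intros j Hj. apply bool_iff.
    rewrite ti_iff, Reqb_iff. fold p. split.
    - intros E. apply NNPP. intros E'. destruct (F3 j Hj E') as [[]|[]]; lra.
    - intros E. destruct (Nat.eq_dec j i) as [->|Hn]. apply F1. apply (Kval j Hn E). }
  assert (I2 : / INR 2 = / 2) by (f_equal; simpl; lra).
  assert (I1 : / INR 1 = 1) by (simpl; apply Rinv_1).
  assert (H2 : 2 * / 2 = 1) by (apply Rinv_r; lra).
  assert (Ht' : - h <= t - p <= h) by (revert Ht; unfold Rabs; destruct Rcase_abs; intros; lra).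
  assert (Hyp' : h < y - p \/ h < p - y) by (revert Hyp; unfold Rabs; destruct Rcase_abs; intros; lra).
  split; intros Dir.
  - assert (Kpos : 0 < (p - t) * (p + t - 2 * y)).
    { destruct Dir as [[]|[]]; destruct Hyp'; try lra;
      [assert (p - t < 0) by lra; assert (p + t - 2 * y < 0) by lra
      |assert (p - t > 0) by lra; assert (p + t - 2 * y > 0) by lra]; nra. }
    assert (EC : existsb (fun j => Rltb (dist_c X j y) (dist_c X i y)) (seq 0 m)
               = existsb (fun j => Rltb (dist_c x j y) (dist_c x i y)) (seq 0 m)).
    { apply existsb_ext_in. intros j Hj. apply in_seq in Hj. apply bool_iff. rewrite !cl_iff.
      destruct (Nat.eq_dec j i) as [->|Hn]. destruct F1 as [-> ->]. lra.
      destruct (Req_dec (x j) p) as [E'|E'].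
      + destruct (Kval j Hn E') as [-> ->]. lra.
      + destruct (F3 j ltac:(lia) E') as [[]|[]]; lra. }
    assert (EF : existsb (fun j => Rltb (dist_c X i y) (dist_c X j y)) (seq 0 m) = true).
    { apply existsb_exists. exists k. split. apply in_seq; lia. apply fa_iff.
      rewrite (proj2 (Kval k Hki Hxk)). auto. }
    unfold prob_first, prob_last. fold X. rewrite EC, EF, CX, Cx.
    split; try lra. rewrite I1, I2. destruct (existsb (fun j => Rltb (dist_c x j y) (dist_c x i y)) (seq 0 m)); [lra| rewrite H2; reflexivity].
  - assert (Kneg : (p - t) * (p + t - 2 * y) < 0).
    { destruct Dir as [[]|[]]; destruct Hyp'; try lra;
      [assert (p - t < 0) by lra; assert (p + t - 2 * y > 0) by lra
      |assert (p - t > 0) by lra; assert (p + t - 2 * y < 0) by lra]; nra. }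
    assert (EF : existsb (fun j => Rltb (dist_c X i y) (dist_c X j y)) (seq 0 m)
               = existsb (fun j => Rltb (dist_c x i y) (dist_c x j y)) (seq 0 m)).
    { apply existsb_ext_in. intros j Hj. apply in_seq in Hj. apply bool_iff. rewrite !fa_iff.
      destruct (Nat.eq_dec j i) as [->|Hn]. destruct F1 as [-> ->]. lra.
      destruct (Req_dec (x j) p) as [E'|E'].
      + destruct (Kval j Hn E') as [-> ->]. lra.
      + destruct (F3 j ltac:(lia) E') as [[]|[]]; lra. }
    assert (EC : existsb (fun j => Rltb (dist_c X j y) (dist_c X i y)) (seq 0 m) = true).
    { apply existsb_exists. exists k. split. apply in_seq; lia. apply cl_iff.
      rewrite (proj2 (Kval k Hki Hxk)). auto. }
    unfold prob_first, prob_last. fold X. rewrite EC, EF, CX, Cx.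
    split; try lra. rewrite I1, I2. destruct (existsb (fun j => Rltb (dist_c x i y) (dist_c x j y)) (seq 0 m)); [lra| rewrite H2; reflexivity].
Qed.

Lemma exists_dl m (x : nat -> R) p : exists dl, 0 < dl <= 1 /\
  forall j, (j < m)%nat -> x j <> p -> dl <= Rabs (x j - p).
Proof.
  induction m.
  - exists 1. split. lra. intros; lia.
  - destruct IHm as [dl [Hd H]].
    destruct (Req_dec (x m) p) as [E|E].
    + exists dl. split; auto. intros j Hj Hn. destruct (Nat.eq_dec j m) as [->|]. congruence. apply H; auto; lia.
    + exists (Rmin dl (Rabs (x m - p))). split.
      * split. apply Rmin_glb_lt. lra. apply Rabs_pos_lt. lra. pose proof (Rmin_l dl (Rabs (x m - p))). lra.
      * intros j Hj Hn. destruct (Nat.eq_dec j m) as [->|]. apply Rmin_r.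
        pose proof (Rmin_l dl (Rabs (x m - p))). pose proof (H j ltac:(lia) Hn). lra.
Qed.

Lemma near_pf m x i dl y : (i < m)%nat -> countc m (fun j => Reqb (x j) (x i)) = 2%nat ->
  (forall j, (j < m)%nat -> x j <> x i -> dl <= Rabs (x j - x i)) ->
  0 < Rabs (y - x i) < dl / 2 -> prob_first m x i y = / 2.
Proof.
  intros Hi Hc Hdl Hy.
  assert (F3 : forall j, (j < m)%nat -> x j <> x i -> 0 < S x i j y).
  { intros j Hj E. pose proof (Hdl j Hj E). unfold S.
    assert (S1 : Rabs ((x j + x i - 2 * y) - (x j - x i)) < Rabs (x j - x i)).
    { replace ((x j + x i - 2 * y) - (x j - x i)) with (-2 * (y - x i)) by ring.
      rewrite Rabs_mult. replace (Rabs (-2)) with 2. lra. unfold Rabs; destruct Rcase_abs; lra. }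
    apply strict_same in S1. destruct S1 as [[]|[]]; nra. }
  unfold prob_first.
  replace (existsb (fun j => Rltb (dist_c x j y) (dist_c x i y)) (seq 0 m)) with false.
  2:{ symmetry. apply Bool.not_true_iff_false. intros Hex. apply existsb_exists in Hex.
      destruct Hex as [j [Hj Hlt]]. apply in_seq in Hj. apply cl_iff in Hlt.
      destruct (Req_dec (x j) (x i)) as [E|E]. unfold S in Hlt. rewrite E in Hlt. lra.
      pose proof (F3 j ltac:(lia) E). lra. }
  rewrite (countc_ext m _ (fun j => Reqb (x j) (x i))).
  - rewrite Hc. replace (INR 2) with 2 by (simpl; lra). reflexivity.
  - intros j Hj. apply bool_iff. rewrite ti_iff, Reqb_iff. split.
    + intros E. apply NNPP. intros E'. pose proof (F3 j Hj E'). lra.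
    + intros E. unfold S. rewrite E. ring.
Qed.

Lemma vs_bound c m X i y : 0 <= c -> Rabs (voter_score c m X i y) <= 1 + c.
Proof.
  intros Hc. unfold voter_score. pose proof (pf_bound m X i y). pose proof (pl_bound m X i y).
  apply Rabs_le. split; nra.
Qed.

Lemma lim_le L v K a : 0 < a -> 0 <= K -> (forall h, 0 < h < a -> L <= v + K * h) -> L <= v.
Proof.
  intros Ha HK H. apply Rnot_lt_le. intros Hlt.
  set (h := Rmin (a / 2) ((L - v) / (2 * (K + 1)))).
  assert (h1 : 0 < h) by (apply Rmin_glb_lt; [lra| apply Rdiv_lt_0_compat; lra]).
  assert (h2 : h <= a / 2) by apply Rmin_l.
  assert (h3 : h <= (L - v) / (2 * (K + 1))) by apply Rmin_r.
  assert (h4 : h * (2 * (K + 1)) <= L - v).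
  { apply (Rmult_le_compat_r (2 * (K + 1))) in h3; [|lra].
    unfold Rdiv in h3. rewrite Rmult_assoc, Rinv_l in h3 by lra. lra. }
  pose proof (H h ltac:(lra)). nra.
Qed.

Lemma small_eps K h eps : 0 <= K -> 0 <= h -> 0 < eps -> h < eps / (K + 1) -> K * h < eps.
Proof.
  intros HK Hh He H. apply (Rmult_lt_compat_r (K + 1)) in H; [|lra].
  unfold Rdiv in H. rewrite Rmult_assoc, Rinv_l in H by lra. nra.
Qed.

Theorem lemma2 (c : R) (m : nat) (x : nat -> R) (i : nat) :
  0 <= c -> (2 <= m)%nat -> is_profile m x -> (i < m)%nat ->
  (* q >= 2: at least two distinct occupied positions *)
  (exists j, (j < m)%nat /\ x j <> x i) ->
  (* n_l = 2: exactly two candidates (i and one other) at x^l = x i *)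
  countc m (fun j => Reqb (x j) (x i)) = 2%nat ->
  exists Lm Lp,
    left_lim c m x i (x i) Lm /\ right_lim c m x i (x i) Lp /\
    Lm + Lp = 2 * score c m x i /\
    (nash_eq c m x -> non_convergent m x ->
       Lm = score c m x i /\ Lp = score c m x i).
Proof.
  intros Hc Hm Hprof Hi Hj0 Hcount.
  destruct (exists_dl m x (x i)) as [dl [Hdl Hdlj]].
  set (D := x i :: mids x i m).
  set (pfp := prob_first m x i). set (plp := prob_last m x i).
  set (gp := fun y => if Rlt_dec (x i) y then 2 * pfp y else - (2 * c * plp y)).
  assert (Ivs : forall X, ex_RInt (voter_score c m X i) 0 1) by (intros; exact (PC_int _ _ (vs_PC c m X i))).
  assert (Ipf : ex_RInt pfp 0 1) by exact (PC_int _ _ (pf_PC m x i)).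
  assert (Ipl : ex_RInt plp 0 1) by exact (PC_int _ _ (pl_PC m x i)).
  assert (Igp : ex_RInt gp 0 1).
  { apply (PC_int D). apply PC_if.
    - exact (PC_op D (fun a _ => 2 * a) pfp pfp (PC_sub _ _ _ (pf_PC m x i) (fun q H => in_cons (x i) q _ H))
                                                (PC_sub _ _ _ (pf_PC m x i) (fun q H => in_cons (x i) q _ H))).
    - exact (PC_op D (fun a _ => - (2 * c * a)) plp plp (PC_sub _ _ _ (pl_PC m x i) (fun q H => in_cons (x i) q _ H))
                                                (PC_sub _ _ _ (pl_PC m x i) (fun q H => in_cons (x i) q _ H))).
    - left; auto. }
  set (Lp := integral01 gp).
  set (Lm := 2 * score c m x i - Lp).
  set (M := 5 * (1 + c)).
  set (K := M * (INR (length D) * 2)).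
  assert (HK : 0 <= K) by (unfold K, M; pose proof (pos_INR (length D)); nra).
  assert (Bpf : forall y, 0 <= pfp y <= 1) by (intros; apply pf_bound).
  assert (Bpl : forall y, 0 <= plp y <= 1) by (intros; apply pl_bound).
  assert (Bg : forall y, Rabs (gp y) <= 2 + 2 * c).
  { intros y. unfold gp. pose proof (Bpf y). pose proof (Bpl y). destruct Rlt_dec; apply Rabs_le; split; nra. }
  assert (GEN : forall t y, Rabs (t - x i) <= Rabs (t - x i) -> t <> x i -> Rabs (t - x i) < dl ->
     (forall d, In d D -> Rabs (t - x i) < Rabs (y - d)) ->
     ((((x i < t /\ x i < y) \/ (t < x i /\ y < x i)) ->
       prob_first m (upd x i t) i y = 2 * pfp y /\ prob_last m (upd x i t) i y = 0)
     /\ (((x i < t /\ y < x i) \/ (t < x i /\ x i < y)) ->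
       prob_first m (upd x i t) i y = 0 /\ prob_last m (upd x i t) i y = 2 * plp y))).
  { intros t y H1 H2 H3 H4. apply (pointwise m x i dl (Rabs (t - x i)) t y); auto.
    split; auto. apply Rabs_pos_lt. intro E. apply H2. lra. }
  assert (ClaimR : forall t, x i < t < x i + dl ->
            Rabs (score c m (upd x i t) i - Lp) <= K * (t - x i)).
  { intros t Ht. unfold score, Lp. rewrite !integral01_RInt by auto.
    rewrite <- RI_minus by auto.
    replace (K * (t - x i)) with (M * (INR (length D) * (2 * (t - x i)))) by (unfold K; nra).
    apply small_int. lra. unfold M; lra. apply exR_minus; auto.
    - intros y _. pose proof (vs_bound c m (upd x i t) i y Hc). pose proof (Bg y).
      pose proof (Rabs_triang (voter_score c m (upd x i t) i y) (- gp y)). rewrite Rabs_Ropp in H1.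
      unfold Rminus. unfold M. lra.
    - intros y _ Hy. assert (Ea : Rabs (t - x i) = t - x i) by (apply Rabs_pos_eq; lra).
      assert (Hy' : forall d, In d D -> Rabs (t - x i) < Rabs (y - d)) by (rewrite Ea; auto).
      destruct (GEN t y ltac:(lra) ltac:(lra) ltac:(lra) Hy') as [Tw Aw].
      assert (Hyp := Hy (x i) (or_introl eq_refl)).
      unfold voter_score, gp. destruct (Rlt_dec (x i) y).
      + destruct (Tw ltac:(left; lra)) as [-> ->]. lra.
      + assert (y < x i). { destruct (Rtotal_order y (x i)) as [|[E|]]; auto. subst y. rewrite Rminus_diag, Rabs_R0 in Hyp. lra. lra. }
        destruct (Aw ltac:(left; lra)) as [-> ->]. lra. }
  assert (ClaimL : forall t, x i - dl < t < x i ->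
            Rabs (score c m (upd x i t) i - Lm) <= K * (x i - t)).
  { intros t Ht. unfold Lm, score, Lp. rewrite !integral01_RInt by auto.
    assert (Iv2 : ex_RInt (fun y => 2 * voter_score c m x i y) 0 1) by (apply exR_scal; auto).
    assert (E : 2 * RInt (voter_score c m x i) 0 1 - RInt gp 0 1
                = RInt (fun y => 2 * voter_score c m x i y - gp y) 0 1).
    { rewrite RI_minus, RI_scal; auto. }
    rewrite E, <- RI_minus by (auto; apply exR_minus; auto).
    replace (K * (x i - t)) with (M * (INR (length D) * (2 * (x i - t)))) by (unfold K; nra).
    apply small_int. lra. unfold M; lra. apply exR_minus; auto. apply exR_minus; auto.
    - intros y _. pose proof (vs_bound c m (upd x i t) i y Hc). pose proof (vs_bound c m x i y Hc).
      pose proof (Bg y).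
      revert H H0 H1. unfold M. generalize (voter_score c m (upd x i t) i y), (voter_score c m x i y), (gp y).
      intros a b g Ha Hb Hg'. apply Rabs_le. apply Rabs_le_between in Ha. apply Rabs_le_between in Hb.
      apply Rabs_le_between in Hg'. lra.
    - intros y _ Hy. assert (Ea : Rabs (t - x i) = x i - t) by (rewrite Rabs_left; lra).
      assert (Hy' : forall d, In d D -> Rabs (t - x i) < Rabs (y - d)) by (rewrite Ea; auto).
      destruct (GEN t y ltac:(lra) ltac:(lra) ltac:(lra) Hy') as [Tw Aw].
      assert (Hyp := Hy (x i) (or_introl eq_refl)).
      unfold voter_score, gp. fold pfp plp. destruct (Rlt_dec (x i) y).
      + destruct (Aw ltac:(right; lra)) as [-> ->]. lra.
      + assert (y < x i). { destruct (Rtotal_order y (x i)) as [|[E'|]]; auto. subst y. rewrite Rminus_diag, Rabs_R0 in Hyp. lra. lra. }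
        destruct (Tw ltac:(right; lra)) as [-> ->]. lra. }
  exists Lm, Lp. split; [|split; [|split]].
  - unfold left_lim, limit1_in, limit_in. intros eps Heps.
    exists (Rmin dl (eps / (K + 1))). split.
    + apply Rmin_glb_lt. lra. apply Rdiv_lt_0_compat; lra.
    + intros t [Ht Hd]. simpl in Hd |- *. unfold R_dist in *.
      rewrite Rabs_left in Hd by lra.
      pose proof (Rmin_l dl (eps / (K + 1))). pose proof (Rmin_r dl (eps / (K + 1))).
      pose proof (ClaimL t ltac:(lra)). pose proof (small_eps K (x i - t) eps HK ltac:(lra) Heps ltac:(lra)). lra.
  - unfold right_lim, limit1_in, limit_in. intros eps Heps.
    exists (Rmin dl (eps / (K + 1))). split.
    + apply Rmin_glb_lt. lra. apply Rdiv_lt_0_compat; lra.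
    + intros t [Ht Hd]. simpl in Hd |- *. unfold R_dist in *.
      rewrite Rabs_pos_eq in Hd by lra.
      pose proof (Rmin_l dl (eps / (K + 1))). pose proof (Rmin_r dl (eps / (K + 1))).
      pose proof (ClaimR t ltac:(lra)). pose proof (small_eps K (t - x i) eps HK ltac:(lra) Heps ltac:(lra)). lra.
  - unfold Lm. lra.
  - intros [_ Hnash] _.
    set (v := score c m x i).
    assert (Fq : forall t, 0 <= t <= 1 -> score c m (upd x i t) i <= v) by (intros; apply Hnash; auto).
    assert (Hp := Hprof i Hi).
    assert (LmLe : 0 < x i -> Lm <= v).
    { intros Hp0. apply (lim_le Lm v K (Rmin dl (x i))). apply Rmin_glb_lt; lra. auto.
      intros h Hh. pose proof (Rmin_l dl (x i)). pose proof (Rmin_r dl (x i)).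
      pose proof (ClaimL (x i - h) ltac:(lra)). pose proof (Fq (x i - h) ltac:(lra)).
      replace (x i - (x i - h)) with h in H1 by ring. apply Rabs_le_between in H1. lra. }
    assert (LpLe : x i < 1 -> Lp <= v).
    { intros Hp1. apply (lim_le Lp v K (Rmin dl (1 - x i))). apply Rmin_glb_lt; lra. auto.
      intros h Hh. pose proof (Rmin_l dl (1 - x i)). pose proof (Rmin_r dl (1 - x i)).
      pose proof (ClaimR (x i + h) ltac:(lra)). pose proof (Fq (x i + h) ltac:(lra)).
      replace (x i + h - x i) with h in H1 by ring. apply Rabs_le_between in H1. lra. }
    assert (Vsplit : v = RInt pfp 0 1 - c * RInt plp 0 1).
    { unfold v, score. rewrite integral01_RInt by auto. unfold voter_score.
      rewrite (RI_minus pfp (fun y => c * plp y)) by (auto; apply exR_scal; auto).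
      rewrite RI_scal; auto. }
    assert (Pnn : 0 <= RInt plp 0 1).
    { assert (RInt (fun _ => 0) 0 1 <= RInt plp 0 1) by (apply RInt_le; [lra|apply ex_RInt_const|auto|intros; apply Bpl]).
      rewrite RI_const in H. lra. }
    assert (cP : 0 <= c * RInt plp 0 1) by (apply Rmult_le_pos; auto).
    destruct (Rtotal_order (x i) 0) as [H0|[H0|H0]]; [lra| |].
    +
      exfalso. pose proof (LpLe ltac:(lra)) as HLp.
      assert (Q : (dl / 2 - 0) / 2 <= RInt pfp 0 1).
      { apply pos_int; auto. lra. lra. intros; apply Bpf.
        intros y Hy. unfold pfp. rewrite (near_pf m x i dl y); auto. lra.
        rewrite H0, Rminus_0_r, Rabs_pos_eq; lra. }
      assert (ELp : Lp = 2 * RInt pfp 0 1).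
      { unfold Lp. rewrite integral01_RInt by auto. rewrite <- RI_scal by auto.
        apply RI_ext. intros y Hy. rewrite Rmin_left in Hy by lra. unfold gp.
        destruct Rlt_dec; auto. lra. }
      lra.
    + destruct (Rtotal_order (x i) 1) as [H1|[H1|H1]]; [|exfalso|lra].
      * pose proof (LmLe H0) as A1. pose proof (LpLe H1) as A2. unfold Lm in A1 |- *. fold v in A1 |- *. split; lra.
      * pose proof (LmLe ltac:(lra)) as HLm.
        assert (Q : (1 - (1 - dl / 2)) / 2 <= RInt pfp 0 1).
        { apply pos_int; auto. lra. lra. intros; apply Bpf.
          intros y Hy. unfold pfp. rewrite (near_pf m x i dl y); auto. lra.
          rewrite H1, Rabs_left; lra. }
        assert (ELp : Lp = (- (2 * c)) * RInt plp 0 1).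
        { unfold Lp. rewrite integral01_RInt by auto. rewrite <- RI_scal by auto.
          apply RI_ext. intros y Hy. rewrite Rmax_right in Hy by lra. unfold gp.
          destruct Rlt_dec. lra. lra. }
        unfold Lm in HLm. fold v in HLm. lra.
Qed.
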